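(* The language $\bigcup_{w\in\{0,1\}^*}(w \,\text{ш}\, w \,\text{ш}\, w)$ is not context-free.
   Context: For words $x,y$, the (ordinary) shuffle $x \,\text{ш}\, y$ is the finite set of all words $z = x_1y_1x_2y_2\cdots x_ny_n$ for some $n\ge 1$ and words $x_1,\dots,x_n,y_1,\dots,y_n$ (possibly empty) with $x=x_1\cdots x_n$ and $y=y_1\cdots y_n$. It is extended to languages by $L_1\,\text{ш}\,L_2=\bigcup_{x\in L_1,y\in L_2}(x\,\text{ш}\,y)$, so $w\,\text{ш}\,w\,\text{ш}\,w = (w\,\text{ш}\,w)\,\text{ш}\,\{w\}$. *)

(* Defs.v *)
From Stdlib Require Import Relations.Relation_Operators List.
From mathcomp Require Import all_boot.
Set Implicit Arguments. Unset Strict Implicit. Unset Printing Implicit Defensive.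

Notation word := (seq bool).

Inductive shuffle {T : Type} : seq T -> seq T -> seq T -> Prop :=
| shuffle_nil : shuffle [::] [::] [::]
| shuffle_l a x y z : shuffle x y z -> shuffle (a :: x) y (a :: z)
| shuffle_r a x y z : shuffle x y z -> shuffle x (a :: y) (a :: z).

(* The language  U_{w in {0,1}^*} (w ш w ш w) = U_w ((w ш w) ш {w}). *)
Definition triple_shuffle_lang (z : word) : Prop :=
  exists w u : word, shuffle w w u /\ shuffle u w z.

Record cfg (T : Type) := CFG {
  nonterm : finType;
  start : nonterm;
  rules : seq (nonterm * seq (nonterm + T))
}.

Inductive cfg_step (T : Type) (G : cfg T) :
  seq (nonterm G + T) -> seq (nonterm G + T) -> Prop :=
| cfg_step_rule (s1 s2 : seq (nonterm G + T)) (A : nonterm G) rhs :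
    List.In (A, rhs) (rules G) ->
    @cfg_step T G (s1 ++ inl A :: s2) (s1 ++ rhs ++ s2).

Definition cfg_lang (T : Type) (G : cfg T) (w : seq T) : Prop :=
  clos_refl_trans _ (@cfg_step T G) [:: inl (start G)] (map inr w).

Definition context_free (T : Type) (L : seq T -> Prop) : Prop :=
  exists G : cfg T, forall w, L w <-> cfg_lang G w.

(* Main.v *)
From Stdlib Require Import Relations.Relation_Operators List.
Require Import Defs.
From mathcomp Require Import all_boot zify.
Set Implicit Arguments. Unset Strict Implicit. Unset Printing Implicit Defensive.


Inductive D (T : Type) (G : cfg T) : (nonterm G + T) -> seq T -> nat -> nat -> Prop :=
| Dleaf (a : T) : D (@inr (nonterm G) T a) [:: a] 0 1
| Dnode A rhs w h s : List.In (A, rhs) (rules G) -> DS rhs w h s -> D (inl A) w h.+1 s.+1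
with DS (T : Type) (G : cfg T) : seq (nonterm G + T) -> seq T -> nat -> nat -> Prop :=
| DSnil : DS (@nil (nonterm G + T)) [::] 0 0
| DScons X xs w1 w2 h1 h2 s1 s2 : D X w1 h1 s1 -> DS xs w2 h2 s2 ->
    DS (X :: xs) (w1 ++ w2) (maxn h1 h2) (s1 + s2).
Arguments D {T} G _ _ _ _.
Arguments DS {T} G _ _ _ _.
Arguments Dleaf {T G}.
Arguments DSnil {T G}.
Scheme D_ind2 := Minimality for D Sort Prop with DS_ind2 := Minimality for DS Sort Prop.
Combined Scheme D_DS_ind from D_ind2, DS_ind2.

Inductive C (T : Type) (G : cfg T) : (nonterm G + T) -> seq T -> nonterm G -> seq T -> nat -> Prop :=
| Chole B : C (inl B) [::] B [::] 0
| Cnode A rhs u B z m : List.In (A, rhs) (rules G) -> CS rhs u B z m -> C (inl A) u B z m.+1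
with CS (T : Type) (G : cfg T) : seq (nonterm G + T) -> seq T -> nonterm G -> seq T -> nat -> Prop :=
| CShere X xs u B z m w2 h2 s2 : C X u B z m -> DS G xs w2 h2 s2 -> CS (X :: xs) u B (z ++ w2) (m + s2)
| CSthere X xs w1 h1 s1 u B z m : D G X w1 h1 s1 -> CS xs u B z m -> CS (X :: xs) (w1 ++ u) B z (s1 + m).
Arguments C {T} G _ _ _ _ _.
Arguments CS {T} G _ _ _ _ _.
Arguments Chole {T G}.
Scheme C_ind2 := Minimality for C Sort Prop with CS_ind2 := Minimality for CS Sort Prop.
Combined Scheme C_CS_ind from C_ind2, CS_ind2.

Lemma plug T (G : cfg T) :
  (forall X u B z m, C G X u B z m -> forall x h s, D G (inl B) x h s ->
     exists h', D G X (u ++ x ++ z) h' (m + s)) /\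
  (forall xs u B z m, CS G xs u B z m -> forall x h s, D G (inl B) x h s ->
     exists h', DS G xs (u ++ x ++ z) h' (m + s)).
Proof.
apply: C_CS_ind.
- move=> B x h s HD; exists h; by rewrite cats0 add0n.
- move=> A rhs u B z m Hin _ IH x h s HD.
  have [h' H'] := IH x h s HD; exists h'.+1; rewrite addSn; exact: Dnode Hin H'.
- move=> X xs u B z m w2 h2 s2 _ IH HDS x h s HD.
  have [h' H'] := IH x h s HD; exists (maxn h' h2).
  have := DScons H' HDS; rewrite -!catA addnAC; by [].
- move=> X xs w1 h1 s1 u B z m HD1 _ IH x h s HD.
  have [h' H'] := IH x h s HD; exists (maxn h1 h').
  have := DScons HD1 H'; rewrite -!catA addnA; by [].
Qed.

Lemma compose T (G : cfg T) :
  (forall X u B z m, C G X u B z m -> forall u' B' z' m', C G (inl B) u' B' z' m' ->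
     C G X (u ++ u') B' (z' ++ z) (m + m')) /\
  (forall xs u B z m, CS G xs u B z m -> forall u' B' z' m', C G (inl B) u' B' z' m' ->
     CS G xs (u ++ u') B' (z' ++ z) (m + m')).
Proof.
apply: C_CS_ind.
- move=> B u' B' z' m' H; by rewrite cats0 add0n.
- move=> A rhs u B z m Hin _ IH u' B' z' m' H; rewrite addSn; exact: Cnode Hin (IH _ _ _ _ H).
- move=> X xs u B z m w2 h2 s2 _ IH HDS u' B' z' m' H.
  have := CShere (IH _ _ _ _ H) HDS; rewrite -!catA addnAC; by [].
- move=> X xs w1 h1 s1 u B z m HD1 _ IH u' B' z' m' H.
  have := CSthere HD1 (IH _ _ _ _ H); rewrite -!catA addnA; by [].
Qed.

Lemma step_ctx T (G : cfg T) a b l r : @cfg_step _ G a b -> @cfg_step _ G (l ++ a ++ r) (l ++ b ++ r).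
Proof.
case=> s1 s2 A rhs Hin.
have := cfg_step_rule (l ++ s1) (s2 ++ r) Hin.
by rewrite -!catA /=.
Qed.

Lemma rt_ctx T (G : cfg T) a b l r : clos_refl_trans _ (@cfg_step _ G) a b ->
  clos_refl_trans _ (@cfg_step _ G) (l ++ a ++ r) (l ++ b ++ r).
Proof.
elim=> [x y H|x|x y z _ IH1 _ IH2].
- apply: rt_step; exact: step_ctx.
- exact: rt_refl.
- exact: rt_trans IH1 IH2.
Qed.

Lemma sound T (G : cfg T) :
  (forall X w h s, D G X w h s -> clos_refl_trans _ (@cfg_step _ G) [:: X] (map inr w)) /\
  (forall xs w h s, DS G xs w h s -> clos_refl_trans _ (@cfg_step _ G) xs (map inr w)).
Proof.
apply: D_DS_ind.
- move=> a; exact: rt_refl.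
- move=> A rhs w h s Hin _ IH.
  apply: rt_trans IH; apply: rt_step.
  have := cfg_step_rule [::] [::] Hin; by rewrite /= cats0.
- exact: rt_refl.
- move=> X xs w1 w2 h1 h2 s1 s2 _ IH1 _ IH2.
  rewrite map_cat.
  apply: (@rt_trans _ _ _ (map inr w1 ++ xs)).
  + have := rt_ctx [::] xs IH1; by [].
  + have := rt_ctx (map inr w1) [::] IH2; by rewrite !cats0.
Qed.

Lemma DS_cons_inv T (G : cfg T) X xs w h s : DS G (X :: xs) w h s ->
  exists w1 w2 h1 s1 h2 s2, w = w1 ++ w2 /\ D G X w1 h1 s1 /\ DS G xs w2 h2 s2.
Proof. move=> H; inversion H; subst; do 6 eexists; eauto. Qed.

Lemma DS_nil_inv T (G : cfg T) w h s : DS G [::] w h s -> w = [::].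
Proof. move=> H; by inversion H. Qed.

Lemma DS_cat_inv T (G : cfg T) xs ys w h s : DS G (xs ++ ys) w h s ->
  exists w1 w2 h1 s1 h2 s2, w = w1 ++ w2 /\ DS G xs w1 h1 s1 /\ DS G ys w2 h2 s2.
Proof.
elim: xs w h s => [|X xs IH] w h s /= H.
- by exists [::], w, 0, 0, h, s; split; [|split; [constructor|]].
- have [w1 [w2 [h1 [s1 [h2 [s2 [E [K1 K2]]]]]]]] := DS_cons_inv H.
  have [w3 [w4 [h3 [s3 [h4 [s4 [E' [K3 K4]]]]]]]] := IH _ _ _ K2.
  exists (w1 ++ w3), w4, (maxn h1 h3), (s1 + s3), h4, s4; split; first by rewrite E E' catA.
  split; [exact: DScons K1 K3 | exact: K4].
Qed.

Lemma DS_cat T (G : cfg T) xs ys w1 w2 h1 s1 h2 s2 : DS G xs w1 h1 s1 -> DS G ys w2 h2 s2 ->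
  exists h s, DS G (xs ++ ys) (w1 ++ w2) h s.
Proof.
move=> H; elim: H w2 h2 s2 => [|X xs' w3 w4 h3 h4 s3 s4 HD _ IH] w2 h2 s2 H2.
- by exists h2, s2.
- have [h [s H]] := IH _ _ _ H2.
  exists (maxn h3 h), (s3 + s); rewrite -catA; exact: DScons HD H.
Qed.

Lemma DS_map T (G : cfg T) w : exists h s, DS G (map inr w) w h s.
Proof.
elim: w => [|a w [h [s IH]]]; first by exists 0, 0; constructor.
exists (maxn 0 h), (1 + s); have := DScons (Dleaf a) IH; by [].
Qed.

Lemma complete_rt T (G : cfg T) a b : clos_refl_trans _ (@cfg_step _ G) a b ->
  forall w, (exists h s, DS G b w h s) -> exists h s, DS G a w h s.
Proof.
elim=> [x y H|x|x y z _ IH1 _ IH2] w Hw.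
- case: H Hw => l1 l2 A rhs Hin [h [s Hs]].
  have [w1 [w2 [h1 [s1 [h2 [s2 [E [H1 H2]]]]]]]] := DS_cat_inv Hs.
  have [w3 [w4 [h3 [s3 [h4 [s4 [E' [H3 H4]]]]]]]] := DS_cat_inv H2.
  have HA := Dnode Hin H3.
  have HA' := DScons HA H4.
  have [h5 [s5 H5]] := DS_cat H1 HA'.
  by exists h5, s5; rewrite E E'.
- exact: Hw.
- exact: IH1 (IH2 _ Hw).
Qed.

Lemma lang_D T (G : cfg T) w : cfg_lang G w <-> exists h s, D G (inl (start G)) w h s.
Proof.
split.
- move=> H; have [h [s Hs]] := complete_rt H (DS_map G w).
  have [w1 [w2 [h1 [s1 [h2 [s2 [E [K1 K2]]]]]]]] := DS_cons_inv Hs.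
  rewrite (DS_nil_inv K2) cats0 in E; subst w.
  by exists h1, s1.
- case=> h [s Hs]; exact: (proj1 (sound G)) Hs.
Qed.

Lemma find_sub T (G : cfg T) :
  (forall X w h s, D G X w h s -> forall m, 0 < m <= h ->
     exists u B w1 z mc s1, C G X u B z mc /\ D G (inl B) w1 m s1 /\ w = u ++ w1 ++ z /\ s = mc + s1) /\
  (forall xs w h s, DS G xs w h s -> forall m, 0 < m <= h ->
     exists u B w1 z mc s1, CS G xs u B z mc /\ D G (inl B) w1 m s1 /\ w = u ++ w1 ++ z /\ s = mc + s1).
Proof.
apply: D_DS_ind.
- move=> a m /andP [H1 H2]; exfalso; lia.
- move=> A rhs w h s Hin HDS IH m /andP [H1 H2].
  case: (eqVneq m h.+1) => [->|Hne].
  + exists [::], A, w, [::], 0, s.+1; split; first exact: Chole.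
    split; first exact: Dnode Hin HDS.
    by rewrite cats0.
  + have Hm : 0 < m <= h by apply/andP; split => //; lia.
    have [u [B [w1 [z [mc [s1 [HC [HD [E1 E2]]]]]]]]] := IH m Hm.
    exists u, B, w1, z, mc.+1, s1; split; first exact: Cnode Hin HC.
    split => //; split => //; lia.
- move=> m /andP [H1 H2]; exfalso; lia.
- move=> X xs w1 w2 h1 h2 s1 s2 HD IH1 HDS IH2 m /andP [H1 H2].
  case: (leqP m h1) => Hm1.
  + have Hm : 0 < m <= h1 by apply/andP.
    have [u [B [w3 [z [mc [s3 [HC [HD3 [E1 E2]]]]]]]]] := IH1 m Hm.
    exists u, B, w3, (z ++ w2), (mc + s2), s3; split; first exact: CShere HC HDS.
    split => //; split; first by rewrite E1 -!catA.
    lia.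
  + have Hm : 0 < m <= h2 by apply/andP; split => //; lia.
    have [u [B [w3 [z [mc [s3 [HC [HD3 [E1 E2]]]]]]]]] := IH2 m Hm.
    exists (w1 ++ u), B, w3, z, (s1 + mc), s3; split; first exact: CSthere HD HC.
    split => //; split; first by rewrite E1 -!catA.
    lia.
Qed.

Definition bnd T (G : cfg T) : nat :=
  foldr (fun r acc => maxn (size r.2) acc) 2 (rules G).

Lemma bnd_ge2 T (G : cfg T) : 2 <= bnd G.
Proof. rewrite /bnd; elim: (rules G) => //= r rs IH; exact: leq_trans IH (leq_maxr _ _). Qed.

Lemma bnd_rule T (G : cfg T) A rhs : List.In (A, rhs) (rules G) -> size rhs <= bnd G.
Proof.
rewrite /bnd; elim: (rules G) => //= r rs IH [->|H] /=; first exact: leq_maxl.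
exact: leq_trans (IH H) (leq_maxr _ _).
Qed.

Lemma size_bound T (G : cfg T) :
  (forall X w h s, D G X w h s -> size w <= bnd G ^ h) /\
  (forall xs w h s, DS G xs w h s -> size w <= size xs * bnd G ^ h).
Proof.
have b1 : 0 < bnd G by have := bnd_ge2 G; lia.
apply: D_DS_ind.
- by [].
- move=> A rhs w h s Hin _ IH.
  rewrite expnS; apply: leq_trans IH _; apply: leq_mul => //; exact: bnd_rule Hin.
- by [].
- move=> X xs w1 w2 h1 h2 s1 s2 _ IH1 _ IH2.
  rewrite size_cat /= mulSn; apply: leq_add.
  + apply: leq_trans IH1 _; apply: leq_pexp2l => //; exact: leq_maxl.
  + apply: leq_trans IH2 _; apply: leq_mul => //; apply: leq_pexp2l => //; exact: leq_maxr.
Qed.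

Definition Q T (G : cfg T) (A : nonterm G) (w : seq T) (s : nat) : Prop :=
  exists B u v x y z m1 m2 hx sx, C G (inl A) u B z m1 /\ C G (inl B) v B y m2 /\ 0 < m2 /\
    D G (inl B) x hx sx /\ w = u ++ v ++ x ++ y ++ z /\ s = m1 + m2 + sx.

Definition Hit T (G : cfg T) (S : seq (nonterm G)) (A : nonterm G) (w : seq T) (s : nat) : Prop :=
  exists B u z m1 x h' s', B \in S /\ C G (inl A) u B z m1 /\ D G (inl B) x h' s' /\
    w = u ++ x ++ z /\ s = m1 + s'.

Lemma D_inl_inv T (G : cfg T) A w h s : D G (inl A) w h s ->
  exists rhs h0 s0, h = h0.+1 /\ s = s0.+1 /\ List.In (A, rhs) (rules G) /\ DS G rhs w h0 s0.
Proof. move=> H; inversion H; subst; do 3 eexists; eauto. Qed.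

Definition nN T (G : cfg T) := #|nonterm G|.

Lemma rep T (G : cfg T) h : forall A w s, D G (inl A) w h s ->
  forall S : seq (nonterm G), uniq S -> nN G < size S + h -> Q A w s \/ Hit S A w s.
Proof.
elim: h => [|h IH] A w s HD S US Hk.
- by inversion HD.
- case: (boolP (A \in S)) => HA.
  + right; exists A, [::], [::], 0, w, h.+1, s; split => //; split; first exact: Chole.
    by rewrite cats0.
  have U2 : uniq (A :: S) by rewrite /= HA US.
  have Hc : (size S).+1 <= nN G.
    have := max_card (mem (A :: S)); rewrite (card_uniqP U2) /=; exact.
  have [rhs [h0 [s0 [Eh [Es [Hin HDS]]]]]] := D_inl_inv HD.
  case: Eh => Eh; subst h0 s.
  have Hm : 0 < h <= h by apply/andP; split => //; lia.
  have [u [B [w1 [z [mc [s1 [HC [HD1 [E1 E2]]]]]]]]] := (proj2 (find_sub G)) _ _ _ _ HDS h Hm.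
  have HCA := Cnode Hin HC.
  have Hk' : nN G < size (A :: S) + h by rewrite /=; lia.
  case: (IH _ _ _ HD1 (A :: S) U2 Hk').
  + case=> [B' [u' [v [x [y [z' [m1 [m2 [hx [sx [HC1 [HC2 [Hm2 [HDx [E3 E4]]]]]]]]]]]]]]].
    left; exists B', (u ++ u'), v, x, y, (z' ++ z), (mc.+1 + m1), m2, hx, sx.
    split; first exact: (proj1 (compose G)) _ _ _ _ _ HCA _ _ _ _ HC1.
    do 3 (split => //); split; first by rewrite E1 E3 -!catA.
    lia.
  + case=> [B' [u' [z' [m1 [x [h' [s' [HB [HC1 [HDx [E3 E4]]]]]]]]]]].
    rewrite in_cons in HB; case/orP: HB => [/eqP EB|HB].
    * subst B'; left; exists A, [::], (u ++ u'), x, (z' ++ z), [::], 0, (mc.+1 + m1), h', s'.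
      split; first exact: Chole.
      split; first exact: (proj1 (compose G)) _ _ _ _ _ HCA _ _ _ _ HC1.
      split; first lia.
      split => //; split; first by rewrite E1 E3 /= cats0 -!catA.
      lia.
    * right; exists B', (u ++ u'), (z' ++ z), (mc.+1 + m1), x, h', s'; split => //.
      split; first exact: (proj1 (compose G)) _ _ _ _ _ HCA _ _ _ _ HC1.
      split => //; split; first by rewrite E1 E3 -!catA.
      lia.
Qed.

Lemma pumping T (G : cfg T) : exists P, forall w, cfg_lang G w -> P <= size w ->
  exists u v x y z, w = u ++ v ++ x ++ y ++ z /\ size (v ++ x ++ y) <= P /\ v ++ y <> [::] /\
    cfg_lang G (u ++ x ++ z) /\ cfg_lang G (u ++ (v ++ v) ++ x ++ (y ++ y) ++ z).
Proof.
set b := bnd G; set k := nN G.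
have b2 : 1 < b by exact: bnd_ge2.
exists (b ^ k.+1) => w /lang_D [h0 [s0 HD0]] Hsz.
suff: forall n s h, s < n -> D G (inl (start G)) w h s ->
  exists u v x y z, w = u ++ v ++ x ++ y ++ z /\ size (v ++ x ++ y) <= b ^ k.+1 /\ v ++ y <> [::] /\
    cfg_lang G (u ++ x ++ z) /\ cfg_lang G (u ++ (v ++ v) ++ x ++ (y ++ y) ++ z).
  by move=> H; exact: (H s0.+1 s0 h0 (ltnSn _) HD0).
elim=> [|n IHn] s h Hs HD; first by [].
have Hh : k.+1 <= h.
  have := (proj1 (size_bound G)) _ _ _ _ HD => Hb.
  rewrite -(leq_exp2l _ _ b2); exact: leq_trans Hsz Hb.
have Hm : 0 < k.+1 <= h by [].
have [u0 [A [w1 [z0 [m0 [s1 [HC0 [HD1 [E1 E2]]]]]]]]] := (proj1 (find_sub G)) _ _ _ _ HD _ Hm.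
have [HQ|HH] := rep HD1 (S := [::]) (erefl _) (leqnn _); last first.
  by case: HH => [B [? [? [? [? [? [? []]]]]]]].
case: HQ => [B [u' [v [x [y [z' [m1 [m2 [hx [sx [HC1 [HC2 [Hm2 [HDx [E3 E4]]]]]]]]]]]]]]].
have Cw := (proj1 (compose G)) _ _ _ _ _ HC0 _ _ _ _ HC1.
have Hw : w = (u0 ++ u') ++ v ++ x ++ y ++ (z' ++ z0) by rewrite E1 E3 -!catA.
have [Hvy|Hvy] : (v ++ y = [::]) \/ (v ++ y <> [::]) by case: (v ++ y) => [|? ?]; [left|right].
- have Hv : v = [::] by move: Hvy; case: (v) => [|? ?].
  have Hy : y = [::] by move: Hvy; rewrite Hv.
  have [h' H'] := (proj1 (plug G)) _ _ _ _ _ Cw _ _ _ HDx.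
  have Ew : (u0 ++ u') ++ x ++ z' ++ z0 = w by rewrite Hw Hv Hy.
  rewrite Ew in H'; apply: (IHn _ _ _ H').
  lia.
- exists (u0 ++ u'), v, x, y, (z' ++ z0); split => //.
  split.
    have := (proj1 (size_bound G)) _ _ _ _ HD1; apply: leq_trans.
    rewrite E3 !size_cat; lia.
  split; first exact: Hvy.
  split.
  + apply/lang_D; have [h' H'] := (proj1 (plug G)) _ _ _ _ _ Cw _ _ _ HDx.
    by exists h', (m0 + m1 + sx); rewrite -!catA in H' *.
  + apply/lang_D.
    have C2 := (proj1 (compose G)) _ _ _ _ _ HC2 _ _ _ _ HC2.
    have Cw2 := (proj1 (compose G)) _ _ _ _ _ Cw _ _ _ _ C2.
    have [h' H'] := (proj1 (plug G)) _ _ _ _ _ Cw2 _ _ _ HDx.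
    by exists h', (m0 + m1 + (m2 + m2) + sx); rewrite -!catA in H' *.
Qed.

Definition cnt (b : bool) (s : seq bool) : nat := count_mem b s.
Notation c1 s := (cnt true s).
Notation c0 s := (cnt false s).

Lemma cnt_cat b (s t : seq bool) : cnt b (s ++ t) = cnt b s + cnt b t.
Proof. exact: count_cat. Qed.
Lemma cnt_cons b a (s : seq bool) : cnt b (a :: s) = (a == b) + cnt b s.
Proof. by []. Qed.
Lemma cnt_nil b : cnt b [::] = 0.
Proof. by []. Qed.

Lemma cnt01 (s : seq bool) : c0 s + c1 s = size s.
Proof. elim: s => // [[]] s IH; rewrite !cnt_cons /=; lia. Qed.

Lemma shuffle_count (x y z : seq bool) b : shuffle x y z -> cnt b z = cnt b x + cnt b y.
Proof. elim=> // a x' y' z' _ IH; rewrite !cnt_cons; lia. Qed.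

Lemma shuffle_cons_inv T (x y : seq T) a z : shuffle x y (a :: z) ->
  (exists x', x = a :: x' /\ shuffle x' y z) \/ (exists y', y = a :: y' /\ shuffle x y' z).
Proof. move=> H; inversion H; subst; [left|right]; eexists; eauto. Qed.

Lemma shuffle_split T (P Q : seq T) : forall x y, shuffle x y (P ++ Q) ->
  exists x1 x2 y1 y2, x = x1 ++ x2 /\ y = y1 ++ y2 /\ shuffle x1 y1 P /\ shuffle x2 y2 Q.
Proof.
elim: P => [|a P IH] x y /= H.
- exists [::], x, [::], y; do 2 (split => //); split => //; exact: shuffle_nil.
- case: (shuffle_cons_inv H) => [[x' [-> H']]|[y' [-> H']]].
  + have [x1 [x2 [y1 [y2 [E1 [E2 [H1 H2]]]]]]] := IH _ _ H'.
    exists (a :: x1), x2, y1, y2; rewrite E1 E2; do 2 (split => //); split => //.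
    exact: shuffle_l.
  + have [x1 [x2 [y1 [y2 [E1 [E2 [H1 H2]]]]]]] := IH _ _ H'.
    exists x1, x2, (a :: y1), y2; rewrite E1 E2; do 2 (split => //); split => //.
    exact: shuffle_r.
Qed.

Lemma shuffle_nil_l T (y : seq T) : shuffle [::] y y.
Proof. elim: y => [|a y IH]; [exact: shuffle_nil | exact: shuffle_r]. Qed.

Lemma shuffle_cat T (x y : seq T) : shuffle x y (x ++ y).
Proof. elim: x => [|a x IH] /=; [exact: shuffle_nil_l | exact: shuffle_l]. Qed.

Lemma pref_bound (w p q : seq bool) s : w = true :: s -> w = p ++ q -> c0 p <= c1 p * c0 w.
Proof.
move=> Hw E; case: p E => [|a p] E //=.
have Ha : a = true by move: E; rewrite Hw; case.
subst a; rewrite E cnt_cat cnt_cons /= add1n mulSn; lia.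
Qed.

Lemma L_count z : triple_shuffle_lang z -> 3 %| c1 z.
Proof.
case=> w [u [H1 H2]]; rewrite (shuffle_count _ H2) (shuffle_count _ H1).
apply/dvdnP; exists (c1 w); lia.
Qed.

Lemma L_pref z z' : triple_shuffle_lang z -> z = true :: z' ->
  forall P Q, z = P ++ Q -> 3 * c0 P <= c1 P * c0 z.
Proof.
case=> w [u [H1 H2]] Ez P Q EPQ.
have [s Hs] : exists s, w = true :: s.
  rewrite Ez in H2; case: (shuffle_cons_inv H2) => [[u' [Eu _]]|[w' [Ew _]]]; last by exists w'.
  rewrite Eu in H1; case: (shuffle_cons_inv H1) => [[w' [Ew _]]|[w' [Ew _]]]; by exists w'.
have Hc0 : c0 z = 3 * c0 w by rewrite (shuffle_count _ H2) (shuffle_count _ H1); lia.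
rewrite EPQ in H2.
have [u1 [u2 [w3 [w3' [Eu [Ew3 [S1 _]]]]]]] := shuffle_split H2.
rewrite Eu in H1.
have [w1 [w1' [w2 [w2' [Ew1 [Ew2 [S2 _]]]]]]] := shuffle_split H1.
have B1 := pref_bound Hs Ew1.
have B2 := pref_bound Hs Ew2.
have B3 := pref_bound Hs Ew3.
rewrite (shuffle_count _ S1) (shuffle_count _ S2) (shuffle_count true S1) (shuffle_count true S2) Hc0.
nia.
Qed.

Definition wd p : seq bool := true :: nseq p false.
Definition zw p : seq bool := wd p ++ wd p ++ wd p ++ [::].

Lemma c1_nseq n : c1 (nseq n false) = 0.
Proof. rewrite /cnt; by elim: n. Qed.
Lemma c0_nseq n : c0 (nseq n false) = n.
Proof. rewrite /cnt; by elim: n => //= n ->. Qed.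

Lemma c1_nseq_cat n (s : seq bool) : c1 (nseq n false ++ s) = c1 s.
Proof. rewrite /cnt; by elim: n. Qed.

Lemma c1_take0 (s : seq bool) j : c1 s = 0 -> c1 (take j s) = 0.
Proof. rewrite -{1}(cat_take_drop j s) cnt_cat; lia. Qed.

Lemma take_wd p k r : c1 (take k (wd p ++ r)) = (0 < k) + c1 (take (k - p.+1) r).
Proof.
rewrite take_cat /= size_nseq.
case: ltnP => Hk.
- have -> : k - p.+1 = 0 by lia.
  rewrite take0 addn0.
  case: k Hk => [|k] Hk //=.
  by rewrite (@c1_take0 (nseq p false)) // c1_nseq.
- have -> : 0 < k by lia.
  rewrite /cnt /=; congr (1 + _); move: (take _ r) => X; by clear Hk; elim: p.
Qed.

Lemma O_formula p k : c1 (take k (zw p)) = (0 < k) + (0 < k - p.+1) + (0 < k - p.+1 - p.+1).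
Proof. rewrite /zw !take_wd /=. case: (_ - _) => //=; lia. Qed.

Lemma c1_zw p : c1 (zw p) = 3.
Proof. by rewrite /zw !cnt_cat !cnt_cons c1_nseq. Qed.
Lemma c0_zw p : c0 (zw p) = 3 * p.
Proof. rewrite /zw !cnt_cat !cnt_cons c0_nseq cnt_nil /=; lia. Qed.
Lemma size_zw p : size (zw p) = 3 * p + 3.
Proof. rewrite /zw !size_cat /= size_nseq; lia. Qed.

Lemma zw_in p : triple_shuffle_lang (zw p).
Proof.
exists (wd p), (wd p ++ wd p); split; first exact: shuffle_cat.
rewrite /zw cats0 catA; exact: shuffle_cat.
Qed.

Lemma head_z2 (u v x y t : seq bool) z' : u ++ v ++ x ++ y ++ t = true :: z' ->
  c1 v = 0 -> c1 y = 0 -> v ++ y <> [::] ->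
  exists z'', u ++ (v ++ v) ++ x ++ (y ++ y) ++ t = true :: z''.
Proof.
case: u => [|a u] /=; last by case=> -> _; eexists.
case: v => [|b v] /=; last by case=> -> _ /=.
case: x => [|c x] /=; last by case=> -> _; eexists.
case: y => [|d y] /=; last by case=> -> _ /=.
by [].
Qed.

Theorem mainTheorem2 : ~ context_free triple_shuffle_lang.
Proof.
case=> G HG.
have [p HP] := pumping G.
have Hz := zw_in p.
have Hsz : p <= size (zw p) by rewrite size_zw; lia.
have [u [v [x [y [t [Ez [Hwin [Hvy [H0 H2]]]]]]]]] := HP _ ((HG _).1 Hz) Hsz.
move/HG: H0 => H0; move/HG: H2 => H2.
have Tu : take (size u) (zw p) = u by rewrite Ez take_size_cat.
have T4 : take (size u + size v + size x + size y) (zw p) = u ++ v ++ x ++ y.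
  by rewrite Ez !catA take_size_cat // !size_cat.
have O1 := O_formula p (size u); rewrite Tu in O1.
have O4 := O_formula p (size u + size v + size x + size y); rewrite T4 !cnt_cat in O4.
rewrite !size_cat in Hwin.
have Hz1 := c1_zw p; have Hz0 := c0_zw p; have Hzs := size_zw p.
rewrite Ez !cnt_cat in Hz1 Hz0; rewrite Ez !size_cat in Hzs.
have Wv := cnt01 v; have Wx := cnt01 x; have Wy := cnt01 y; have Wu := cnt01 u; have Wt := cnt01 t.
have Hvy' : 0 < size v + size y by move: Hvy; case: (v) => [|? ?]; case: (y) => [|? ?].
have Hone : c1 v + c1 x + c1 y <= 1 by clear -O1 O4 Hwin; lia.
case: (ltnP 0 (c1 v + c1 y)) => Hc.
- have := L_count H0; rewrite !cnt_cat.
  have -> : c1 u + (c1 x + c1 t) = 2 by clear -Hz1 Hone Hc; lia.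
  by [].
have Hv0 : c1 v = 0 by clear -Hc; lia.
have Hy0 : c1 y = 0 by clear -Hc; lia.
case: (leqP p.+1 (size u)) => Hu.
- have Tp : take p.+1 u = wd p.
    have E := takel_cat (v ++ x ++ y ++ t) Hu; rewrite -Ez in E.
    by rewrite -E /zw take_size_cat //= size_nseq.
  have Ez0 : u ++ x ++ t = wd p ++ (drop p.+1 u ++ x ++ t) by rewrite -Tp [RHS]catA cat_take_drop.
  have := L_pref H0 (Ez0 : _ = true :: _) Ez0.
  rewrite /= c0_nseq c1_nseq !cnt_cat.
  have : c0 (take p.+1 u) + c0 (drop p.+1 u) = c0 u by rewrite -cnt_cat cat_take_drop.
  rewrite Tp /= c0_nseq.
  move=> A B; clear -B Hz0 Wv Wy Hv0 Hy0 Hvy'; lia.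
- set s4 := size u + size v + size x + size y.
  have Hs4 : s4 <= p.*2.+2 by rewrite /s4; clear -Hu Hwin; lia.
  set m := take (p.*2.+2 - s4) t.
  have Tm : take p.*2.+2 (zw p) = (u ++ v ++ x ++ y) ++ m.
    rewrite Ez !catA take_cat !size_cat.
    rewrite ltnNge.
    have -> : (size u + size v + size x + size y <= p.*2.+2) = true by apply/idP.
    by [].
  have O2 := O_formula p p.*2.+2; rewrite Tm !cnt_cat in O2.
  have Cm : c1 u + c1 x + c1 m = 2 by clear -O2 Hv0 Hy0; lia.
  have Wm := cnt01 m.
  have Sm : size m = p.*2.+2 - s4.
    rewrite /m size_takel //; rewrite /s4; clear -Hzs Hs4; lia.
  have Ezt : t = m ++ drop (p.*2.+2 - s4) t by rewrite cat_take_drop.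
  have [z'' Hh] : exists z'', u ++ (v ++ v) ++ x ++ (y ++ y) ++ t = true :: z''.
    apply: head_z2 => //.
    by rewrite -Ez /zw.
  set P2 := u ++ (v ++ v) ++ x ++ (y ++ y) ++ m.
  have EZ : u ++ (v ++ v) ++ x ++ (y ++ y) ++ t = P2 ++ drop (p.*2.+2 - s4) t.
    by rewrite /P2 {1}Ezt !catA.
  have H := L_pref H2 Hh EZ.
  have C1 : c1 P2 = 2 by rewrite /P2 !cnt_cat; clear -Cm Hv0 Hy0; lia.
  rewrite C1 /P2 !cnt_cat in H.
  have Ct : c0 t = c0 m + c0 (drop (p.*2.+2 - s4) t) by rewrite {1}Ezt cnt_cat.
  rewrite /s4 in Sm.
  clear -H Ct Sm Wu Wx Wm Wv Wy Hv0 Hy0 Cm Hz0 Hvy' Hs4.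
  lia.
Qed.
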